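(* Let $g\ge2$ be an integer and $\Gamma=\langle 2,2g+1\rangle$ (the numerical semigroup generated by $2$ and $2g+1$, of genus $g$). Let $G(m)=m+1-2g+E(\Gamma,2)$. Then: \begin{itemize} \item for $m=2g+2k+1$ with $k\ge0$, $\delta^2_\Gamma(m)=G(m)$; \item for $m=2g+2k$ with $0\le k\le g-2$, $\delta^2_\Gamma(m)=G(m)+1$; \item $\delta^2_\Gamma(4g-2)=2g+1=G(4g-2)$. \end{itemize}
   Context: For a numerical semigroup $\Gamma$ (subset of $\mathbb N$ containing $0$, closed under addition, finite complement) with conductor $c$ (least $c$ with $c+\mathbb N\subseteq\Gamma$) and genus $g=|\mathbb N\setminus\Gamma|$: $D_\Gamma(x)=\{s\in\Gamma:x-s\in\Gamma\}$, $\delta^2_\Gamma(m)=\min\{|D_\Gamma(m_1)\cup D_\Gamma(m_2)|: m\le m_1<m_2,\ m_i\in\Gamma\}$, and the second Feng-Rao number $E(\Gamma,2)$ is the integer with $\delta^2_\Gamma(m)=m+1-2g+E(\Gamma,2)$ for all $m\ge 2c-1$. *)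

(* Defs.v *)
From mathcomp Require Import all_boot all_order all_algebra.
Set Implicit Arguments. Unset Strict Implicit. Unset Printing Implicit Defensive.
Import GRing.Theory Num.Theory.

(* The semigroup <a, b> generated by a and b: x = i*a + j*b for some i, j in N
   (for a, b >= 1 the coefficients are automatically <= x). *)
Definition sg2 (a b : nat) : pred nat :=
  fun x => [exists i : 'I_x.+1, exists j : 'I_x.+1, i * a + j * b == x].

Definition is_conductor (G : pred nat) (c : nat) : Prop :=
  (forall n, c <= n -> G n) /\
  (forall c', (forall n, c' <= n -> G n) -> c <= c').

(* genus = number of gaps; all gaps are below the conductor c *)
Definition genus (G : pred nat) (c : nat) : nat := count (predC G) (iota 0 c).

Definition Dset (G : pred nat) (x : nat) : seq nat :=
  [seq s <- iota 0 x.+1 | G s && G (x - s)].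

Definition cardDU (G : pred nat) (m1 m2 : nat) : nat :=
  size (undup (Dset G m1 ++ Dset G m2)).

Definition is_delta2 (G : pred nat) (m : nat) (d : int) : Prop :=
  (exists m1 m2, [/\ m <= m1, m1 < m2, G m1, G m2 & d = Posz (cardDU G m1 m2)]) /\
  (forall m1 m2, m <= m1 -> m1 < m2 -> G m1 -> G m2 -> (d <= Posz (cardDU G m1 m2))%R).

(* E is the second Feng-Rao number E(Gamma,2):
   delta^2(m) = m + 1 - 2 g + E for all m >= 2c - 1. *)
Definition is_FengRao2 (G : pred nat) (E : int) : Prop :=
  exists c, is_conductor G c /\
    forall m, 2 * c - 1 <= m ->
      is_delta2 G m (Posz m + 1 - 2 * Posz (genus G c) + E)%R.

(* Main.v *)
Require Import Defs.
From mathcomp Require Import all_boot all_order all_algebra.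
From mathcomp Require Import zify.
Import GRing.Theory Num.Theory.

Lemma memG g s : sg2 2 (2 * g + 1) s = (s %% 2 == 0) || (2 * g + 1 <= s).
Proof.
apply/idP/idP.
- case/existsP=> i /existsP [j /eqP <-].
  case: (posnP j) => [->|hj]; first by apply/orP; left; lia.
  apply/orP; right; nia.
- move=> h; apply/existsP.
  case/orP: h => h.
  + have hi : s %/ 2 < s.+1 by lia.
    exists (Ordinal hi); apply/existsP; exists ord0 => /=; apply/eqP; lia.
  + have hi : (s - (2*g+1)) %/ 2 < s.+1 by lia.
    have hj : 1 < s.+1 by lia.
    case: (boolP ((s - (2*g+1)) %% 2 == 0)) => hm.
    * exists (Ordinal hi); apply/existsP; exists (Ordinal hj) => /=; apply/eqP; lia.
    * have hi' : s %/ 2 < s.+1 by lia.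
      exists (Ordinal hi'); apply/existsP; exists ord0 => /=; apply/eqP; lia.
Qed.

Definition ar (a n : nat) : seq nat := map (fun i => a + 2 * i) (iota 0 n).

Lemma mem_ar a n s : (s \in ar a n) = [&& a <= s, s < a + 2 * n & (s - a) %% 2 == 0].
Proof.
apply/mapP/idP.
- case=> i; rewrite mem_iota => hi ->; lia.
- move=> h; exists ((s - a) %/ 2); rewrite ?mem_iota; lia.
Qed.

Lemma uniq_ar a n : uniq (ar a n).
Proof.
rewrite map_inj_uniq ?iota_uniq // => i j; lia.
Qed.

Lemma uniq_ar2 a n b m : uniq (ar a n ++ ar b m) = ~~ has (mem (ar a n)) (ar b m).
Proof. by rewrite cat_uniq !uniq_ar andbT. Qed.

Lemma size_ar a n : size (ar a n) = n.
Proof. by rewrite size_map size_iota. Qed.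

Lemma memD g x s : (s \in Dset (sg2 2 (2 * g + 1)) x) =
  [&& s <= x, (s %% 2 == 0) || (2 * g + 1 <= s) & ((x - s) %% 2 == 0) || (2 * g + 1 <= x - s)].
Proof. by rewrite mem_filter mem_iota !memG add0n ltnS andbC. Qed.

Lemma uniqD G x : uniq (Dset G x).
Proof. by rewrite filter_uniq ?iota_uniq. Qed.

Lemma size_uniq_eq (A B : seq nat) : uniq A -> uniq B -> A =i B -> size A = size B.
Proof. move=> uA uB e; exact/perm_size/uniq_perm. Qed.

Lemma ar2_uniq g p q : uniq (ar 0 p ++ ar (2 * g + 1) q).
Proof.
rewrite uniq_ar2; apply/hasPn => s hs; apply/negP => hs'.
move: hs hs'; rewrite -[mem (ar 0 p) s]/(s \in ar 0 p) !mem_ar; lia.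
Qed.

Lemma sizeD_even g x : x %% 2 = 0 ->
  size (Dset (sg2 2 (2 * g + 1)) x) = x %/ 2 + 1 + (x %/ 2 - 2 * g).
Proof.
move=> hx.
rewrite (@size_uniq_eq _ (ar 0 (x %/ 2 + 1) ++ ar (2 * g + 1) (x %/ 2 - 2 * g))).
- by rewrite size_cat !size_ar.
- exact: uniqD.
- exact: ar2_uniq.
- move=> s; rewrite memD mem_cat !mem_ar; apply/idP/idP => H; lia.
Qed.

Lemma sizeD_odd g x : x %% 2 = 1 -> 2 * g + 1 <= x ->
  size (Dset (sg2 2 (2 * g + 1)) x) = x - 2 * g + 1.
Proof.
move=> hx hx2.
rewrite (@size_uniq_eq _ (ar 0 ((x - 2 * g + 1) %/ 2) ++ ar (2 * g + 1) ((x - 2 * g + 1) %/ 2))).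
- rewrite size_cat !size_ar; lia.
- exact: uniqD.
- exact: ar2_uniq.
- move=> s; rewrite memD mem_cat !mem_ar; apply/idP/idP => H; lia.
Qed.

Lemma card_exact G m1 m2 (L : seq nat) : uniq L ->
  (forall s, (s \in Dset G m1) || (s \in Dset G m2) = (s \in L)) ->
  cardDU G m1 m2 = size L.
Proof.
move=> uL h; rewrite /cardDU; apply: size_uniq_eq => //; first exact: undup_uniq.
by move=> s; rewrite mem_undup mem_cat h.
Qed.

Lemma card_lb G m1 m2 (X : seq nat) : uniq X ->
  (forall x, x \in X -> (x \in Dset G m2) && (x \notin Dset G m1)) ->
  size (Dset G m1) + size X <= cardDU G m1 m2.
Proof.
move=> uX h; rewrite /cardDU -size_cat; apply: uniq_leq_size.
- rewrite cat_uniq uniqD uX andbT /=; apply/hasPn => x /h /andP [_ //].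
- move=> x; rewrite mem_cat mem_undup mem_cat => /orP [->//|/h /andP [-> _]].
  by rewrite orbT.
Qed.

Lemma W1 g m : m %% 2 = 1 -> 2 * g + 1 <= m ->
  cardDU (sg2 2 (2 * g + 1)) m (m + 2) = m + 3 - 2 * g.
Proof.
move=> h1 h2.
rewrite (@card_exact _ _ _ (ar 0 ((m + 3 - 2 * g) %/ 2) ++ ar (2 * g + 1) ((m + 3 - 2 * g) %/ 2))).
- rewrite size_cat !size_ar; lia.
- exact: ar2_uniq.
- move=> s; rewrite !memD mem_cat !mem_ar; apply/idP/idP => H; lia.
Qed.

Lemma W3 g m : m %% 2 = 0 -> 4 * g - 2 <= m -> 1 <= g ->
  cardDU (sg2 2 (2 * g + 1)) m (m + 2) = m + 3 - 2 * g.
Proof.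
move=> h1 h2 h3.
rewrite (@card_exact _ _ _ (ar 0 (m %/ 2 + 2) ++ ar (2 * g + 1) (m %/ 2 + 1 - 2 * g))).
- rewrite size_cat !size_ar; lia.
- exact: ar2_uniq.
- move=> s; rewrite !memD mem_cat !mem_ar; apply/idP/idP => H; lia.
Qed.

Ltac xs_tac := move=> x; rewrite !inE => /orP [] /eqP ->; rewrite !memD; lia.
Ltac x1_tac := move=> x; rewrite !inE => /eqP ->; rewrite !memD; lia.

Lemma LBodd g m1 m2 : 1 <= g -> m1 %% 2 = 1 -> 2 * g + 1 <= m1 -> m1 < m2 ->
  (m2 %% 2 == 0) || (2 * g + 1 <= m2) ->
  m1 + 3 - 2 * g <= cardDU (sg2 2 (2 * g + 1)) m1 m2.
Proof.
move=> hg h1 h2 h3 h4.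
case: (m2 %% 2 =P 1) => hm2.
- have := @card_lb (sg2 2 (2 * g + 1)) m1 m2 [:: m2; m2 - 2 * g - 1].
  rewrite sizeD_odd //= => H.
  suff : m1 - 2 * g + 1 + 2 <= cardDU (sg2 2 (2 * g + 1)) m1 m2 by lia.
  apply: H; [rewrite inE andbT; lia | xs_tac].
- have := @card_lb (sg2 2 (2 * g + 1)) m1 m2 [:: m2; m1 - 2 * g + 1].
  rewrite sizeD_odd //= => H.
  suff : m1 - 2 * g + 1 + 2 <= cardDU (sg2 2 (2 * g + 1)) m1 m2 by lia.
  apply: H; [rewrite inE andbT; lia | xs_tac].
Qed.

Lemma LBeven g m1 m2 : 1 <= g -> m1 %% 2 = 0 -> m1 < m2 ->
  (m2 %% 2 == 0) || (2 * g + 1 <= m2) ->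
  m1 %/ 2 + 2 <= cardDU (sg2 2 (2 * g + 1)) m1 m2.
Proof.
move=> hg h1 h3 h4.
have := @card_lb (sg2 2 (2 * g + 1)) m1 m2 [:: m2].
rewrite sizeD_even //= => H.
have : m1 %/ 2 + 1 + (m1 %/ 2 - 2 * g) + 1 <= cardDU (sg2 2 (2 * g + 1)) m1 m2.
  apply: H => //; x1_tac.
lia.
Qed.

Lemma LBeven_big g m1 m2 : 1 <= g -> m1 %% 2 = 0 -> 4 * g <= m1 -> m1 < m2 ->
  (m2 %% 2 == 0) || (2 * g + 1 <= m2) ->
  m1 + 3 - 2 * g <= cardDU (sg2 2 (2 * g + 1)) m1 m2.
Proof.
move=> hg h1 h2 h3 h4.
case: (m2 %% 2 =P 1) => hm2.
- have := @card_lb (sg2 2 (2 * g + 1)) m1 m2 [:: m2; m2 - 2].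
  rewrite sizeD_even //= => H.
  have : m1 %/ 2 + 1 + (m1 %/ 2 - 2 * g) + 2 <= cardDU (sg2 2 (2 * g + 1)) m1 m2.
    apply: H; [rewrite inE andbT; lia | xs_tac].
  lia.
- have := @card_lb (sg2 2 (2 * g + 1)) m1 m2 [:: m2; m2 - 2 * g - 1].
  rewrite sizeD_even //= => H.
  have : m1 %/ 2 + 1 + (m1 %/ 2 - 2 * g) + 2 <= cardDU (sg2 2 (2 * g + 1)) m1 m2.
    apply: H; [rewrite inE andbT; lia | xs_tac].
  lia.
Qed.

Lemma LBall g m1 m2 : 2 <= g -> m1 < m2 ->
  sg2 2 (2 * g + 1) m1 -> sg2 2 (2 * g + 1) m2 ->
  (m1 %% 2 = 1 /\ m1 + 3 - 2 * g <= cardDU (sg2 2 (2 * g + 1)) m1 m2) \/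
  (m1 %% 2 = 0 /\ m1 < 4 * g /\ m1 %/ 2 + 2 <= cardDU (sg2 2 (2 * g + 1)) m1 m2) \/
  (m1 %% 2 = 0 /\ 4 * g <= m1 /\ m1 + 3 - 2 * g <= cardDU (sg2 2 (2 * g + 1)) m1 m2).
Proof.
move=> hg h12; rewrite !memG => hG1 hG2.
case: (m1 %% 2 =P 1) => hp.
- left; split => //; apply: LBodd => //; lia.
- right; case: (leqP (4 * g) m1) => hb.
  + right; split; first lia; split => //; apply: LBeven_big => //; lia.
  + left; split; first lia; split => //; apply: LBeven => //; lia.
Qed.

Definition GG g := sg2 2 (2 * g + 1).

Lemma delta_odd g m : 2 <= g -> m %% 2 = 1 -> 2 * g + 1 <= m ->
  is_delta2 (sg2 2 (2 * g + 1)) m (Posz (m + 3 - 2 * g)).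
Proof.
move=> hg h1 h2; split.
- exists m, (m + 2); split => //; try lia; rewrite ?memG ?W1 //; lia.
- move=> m1 m2 h3 h4 hG1 hG2; rewrite lez_nat.
  have := @LBall g m1 m2 hg h4 hG1 hG2; rewrite memG in hG1; lia.
Qed.

Lemma delta_even_small g m : 2 <= g -> m %% 2 = 0 -> 2 * g <= m -> m <= 4 * g - 4 ->
  is_delta2 (sg2 2 (2 * g + 1)) m (Posz (m + 4 - 2 * g)).
Proof.
move=> hg h1 h2 h5; split.
- exists (m + 1), (m + 1 + 2); split; try lia; rewrite ?memG ?W1 //; lia.
- move=> m1 m2 h3 h4 hG1 hG2; rewrite lez_nat.
  have := @LBall g m1 m2 hg h4 hG1 hG2; rewrite memG in hG1; lia.
Qed.

Lemma delta_big g m : 2 <= g -> 4 * g - 2 <= m ->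
  is_delta2 (sg2 2 (2 * g + 1)) m (Posz (m + 3 - 2 * g)).
Proof.
move=> hg h2; split.
- case: (m %% 2 =P 1) => hp.
  + exists m, (m + 2); split => //; try lia; rewrite ?memG ?W1 //; lia.
  + exists m, (m + 2); split => //; try lia; rewrite ?memG ?W3 //; lia.
- move=> m1 m2 h3 h4 hG1 hG2; rewrite lez_nat.
  have := @LBall g m1 m2 hg h4 hG1 hG2; rewrite memG in hG1; lia.
Qed.

Lemma conductor g : 1 <= g -> is_conductor (sg2 2 (2 * g + 1)) (2 * g).
Proof.
move=> hg; split.
- move=> n hn; rewrite memG; lia.
- move=> c' h; case: (leqP (2 * g) c') => // hc.
  have := h (2 * g - 1); rewrite memG; lia.
Qed.

Lemma genusG g : genus (sg2 2 (2 * g + 1)) (2 * g) = g.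
Proof.
rewrite /genus -size_filter.
rewrite (@size_uniq_eq _ (ar 1 g)) ?size_ar ?filter_uniq ?iota_uniq ?uniq_ar //.
move=> s; rewrite mem_filter mem_iota mem_ar /= memG; apply/idP/idP => H; lia.
Qed.

Theorem theorem5p3 (g : nat) (hg : 2 <= g) :
  exists E : int,
    is_FengRao2 (sg2 2 (2 * g + 1)) E /\
    (forall k : nat,
       is_delta2 (sg2 2 (2 * g + 1)) (2 * g + 2 * k + 1)
         (Posz (2 * g + 2 * k + 1) + 1 - 2 * Posz g + E)%R) /\
    (forall k : nat, k <= g - 2 ->
       is_delta2 (sg2 2 (2 * g + 1)) (2 * g + 2 * k)
         (Posz (2 * g + 2 * k) + 1 - 2 * Posz g + E + 1)%R) /\
    is_delta2 (sg2 2 (2 * g + 1)) (4 * g - 2) (Posz (2 * g + 1)) /\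
    Posz (2 * g + 1) = (Posz (4 * g - 2) + 1 - 2 * Posz g + E)%R.
Proof.
exists 2%R; split; [|split; [|split; [|split]]].
- exists (2 * g); split; first by apply: conductor; lia.
  move=> m hm; rewrite genusG.
  have -> : (Posz m + 1 - 2 * Posz g + 2)%R = Posz (m + 3 - 2 * g) by lia.
  apply: delta_big => //; lia.
- move=> k.
  have -> : (Posz (2 * g + 2 * k + 1) + 1 - 2 * Posz g + 2)%R
    = Posz ((2 * g + 2 * k + 1) + 3 - 2 * g) by lia.
  apply: delta_odd => //; lia.
- move=> k hk.
  have -> : (Posz (2 * g + 2 * k) + 1 - 2 * Posz g + 2 + 1)%R
    = Posz ((2 * g + 2 * k) + 4 - 2 * g) by lia.
  apply: delta_even_small => //; lia.
- have -> : Posz (2 * g + 1) = Posz ((4 * g - 2) + 3 - 2 * g) by congr Posz; lia.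
  apply: delta_big => //; lia.
- lia.
Qed.
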